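(* Let $\mathbb{V}$ be a finite set of nodes and $Z\notin\mathbb{V}$ an additional node, and let $\omega$ be a symmetric weight function on pairs of distinct nodes of $\mathbb{V}\cup\{Z\}$. Let $\sigma^*$ be an optimal TSP route (minimum-cost Hamiltonian cycle) over $\mathbb{V}$, and let $P,Q$ be two nodes that are neighbours on $\sigma^*$. Suppose there is no unordered pair $\{A,B\}$ of distinct nodes of $\mathbb{V}$ with $\{A,B\}\neq\{P,Q\}$ such that $$\omega(A,Z)+\omega(B,Z)-\omega(A,B)\le \omega(P,Z)+\omega(Q,Z)-\omega(P,Q).$$ Then the route obtained from $\sigma^*$ by inserting $Z$ between $P$ and $Q$ is an optimal TSP route over $\mathbb{V}\cup\{Z\}$.
   Context: For a set of nodes with weights $\omega$, a route is a cyclic ordering (permutation) $\sigma=(\sigma_1,\dots,\sigma_n)$ of all nodes, with cost $c(\sigma)=\omega(\sigma_n,\sigma_1)+\sum_{i=1}^{n-1}\omega(\sigma_i,\sigma_{i+1})$; a route is optimal if it minimizes this cost among all permutations. Two nodes are neighbours on $\sigma$ if they are consecutive in $\sigma$ or are its first and last element. *)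

(* Defs.v *)
From mathcomp Require Import all_boot all_order all_algebra.
Set Implicit Arguments. Unset Strict Implicit. Unset Printing Implicit Defensive.
Import Order.TTheory GRing.Theory Num.Theory.
Local Open Scope ring_scope.

(* A route is a sequence listing each node exactly once, read cyclically. *)
Definition is_route (T : finType) (S : {set T}) (s : seq T) : bool :=
  perm_eq s (enum S).

Definition route_cost (T : finType) (R : realDomainType) (w : T -> T -> R)
    (s : seq T) : R :=
  match s with
  | [::] => 0
  | x :: s' => \sum_(e <- zip (x :: s') (rcons s' x)) w e.1 e.2
  end.

Definition optimal_route (T : finType) (R : realDomainType) (w : T -> T -> R)
    (S : {set T}) (s : seq T) : Prop :=
  is_route S s /\ forall t, is_route S t -> route_cost w s <= route_cost w t.

Definition neighbours (T : eqType) (s : seq T) (P Q : T) : bool :=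
  [&& P \in s, Q \in s & (next s P == Q) || (next s Q == P)].

Definition insert_after (T : eqType) (s : seq T) (P Z : T) : seq T :=
  take (index P s).+1 s ++ Z :: drop (index P s).+1 s.

(* Main.v *)
Require Import Defs.
From mathcomp Require Import all_boot all_order all_algebra.
From mathcomp Require Import ring lra.
Import Order.TTheory GRing.Theory Num.Theory.
Local Open Scope ring_scope.

Section Aux.
Variables (T : finType) (R : realDomainType) (w : T -> T -> R).

Fixpoint pc (x : T) (s : seq T) : R :=
  match s with [::] => 0 | y :: s' => w x y + pc y s' end.

Lemma sum_zip x s y :
  \sum_(e <- zip (x :: s) (rcons s y)) w e.1 e.2 = pc x s + w (last x s) y.
Proof.
elim: s x => [|z s IH] x /=; first by rewrite big_cons big_nil addr0 add0r.
by rewrite big_cons /= IH addrA.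
Qed.

Lemma cost_cons x s : route_cost w (x :: s) = pc x s + w (last x s) x.
Proof. by rewrite /route_cost sum_zip. Qed.

Lemma pc_rcons x s y : pc x (rcons s y) = pc x s + w (last x s) y.
Proof.
elim: s x => [|z s IH] x /=; first by rewrite add0r addr0.
by rewrite IH addrA.
Qed.

Lemma cost_rot1 x s : route_cost w (rcons s x) = route_cost w (x :: s).
Proof.
case: s => [|y s] //.
rewrite rcons_cons !cost_cons /= pc_rcons last_rcons.
ring.
Qed.

Lemma cost_catC s1 s2 : route_cost w (s1 ++ s2) = route_cost w (s2 ++ s1).
Proof.
elim: s1 s2 => [|x s1 IH] s2; first by rewrite cats0.
by rewrite cat_cons -cost_rot1 -cats1 -catA IH -catA cat_cons cat0s.
Qed.

Lemma cost_Z2 (Z B : T) u :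
  route_cost w (Z :: B :: u) =
  route_cost w (B :: u) + w Z B + w (last B u) Z - w (last B u) B.
Proof.
rewrite !cost_cons /=. ring.
Qed.

Lemma enumU1 (V : {set T}) Z : Z \notin V -> perm_eq (enum (Z |: V)) (Z :: enum V).
Proof.
move=> HZ; apply: uniq_perm; first exact: enum_uniq.
  by rewrite /= mem_enum HZ enum_uniq.
by move=> x; rewrite in_cons !mem_enum in_setU1.
Qed.

End Aux.

Theorem proposition2 (T : finType) (R : realDomainType) (V : {set T}) (Z : T)
    (w : T -> T -> R) (sigma : seq T) (P Q : T) :
  Z \notin V ->
  (forall x y, x != y -> w x y = w y x) ->
  optimal_route w V sigma ->
  P != Q -> neighbours sigma P Q ->
  (forall A B, A \in V -> B \in V -> A != B ->
     ~~ (((A == P) && (B == Q)) || ((A == Q) && (B == P))) ->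
     ~ (w A Z + w B Z - w A B <= w P Z + w Q Z - w P Q)) ->
  forall tau,
    (next sigma P = Q /\ tau = insert_after sigma P Z) \/
    (next sigma Q = P /\ tau = insert_after sigma Q Z) ->
    optimal_route w (Z |: V) tau.
Proof.
move=> HZ Hsym [Hroute Hopt] HPQ /and3P[Ps Qs _] Hmin tau Htau.
have Hu : uniq sigma by rewrite (perm_uniq Hroute) enum_uniq.
have memS : forall x, (x \in sigma) = (x \in V).
  by move=> x; rewrite (perm_mem Hroute) mem_enum.
have Hins : forall X Y, X \in sigma -> X != Y -> next sigma X = Y ->
    is_route (Z |: V) (insert_after sigma X Z) /\
    route_cost w (insert_after sigma X Z) =
      route_cost w sigma + w X Z + w Z Y - w X Y.
  move=> X Y Xs XY Hn.
  have Hi : (index X sigma < size sigma)%N by rewrite index_mem.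
  have Hd := drop_nth X Hi; have Ht := take_nth X Hi.
  rewrite nth_index // in Hd Ht.
  have Hsig : sigma = take (index X sigma) sigma ++ X :: drop (index X sigma).+1 sigma.
    by rewrite -Hd cat_take_drop.
  have Hta : insert_after sigma X Z =
      take (index X sigma) sigma ++ X :: Z :: drop (index X sigma).+1 sigma.
    by rewrite /insert_after Ht -cats1 -catA.
  set a := take _ sigma in Hsig Hta; set b := drop _ sigma in Hsig Hta.
  split.
    rewrite /is_route Hta. have E := @enumU1 _ V Z HZ. rewrite perm_sym in E. apply: (perm_trans _ E).
    have -> : a ++ [:: X, Z & b] = (a ++ [:: X]) ++ [:: Z] ++ b by rewrite -catA.
    rewrite perm_catCA /= perm_cons -catA cat1s; have Hs2 := Hroute; rewrite {1}Hsig in Hs2; exact: Hs2.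
  have Hn' : next (X :: b ++ a) X = Y.
    have := next_rot (index X sigma) Hu X.
    by rewrite Hn /rot Hd.
  case Eb: (b ++ a) => [|y v] in Hn'.
    by rewrite /= eqxx in Hn'; move: XY; rewrite Hn' eqxx.
  rewrite next_nth mem_head /= eqxx /= in Hn'; subst y.
  rewrite Hta [in route_cost w sigma]Hsig cost_catC [route_cost w (a ++ _)]cost_catC !cat_cons Eb.
  rewrite !cost_cons /=.
  ring.
have QV : Q \in V by rewrite -memS.
have QP : Q != P by rewrite eq_sym.
have PV : P \in V by rewrite -memS.
have ZneqV : forall x, x \in V -> Z != x.
  by move=> x xV; apply/eqP => E; move: HZ; rewrite E xV.
have [Htr Hct] : is_route (Z |: V) tau /\
    route_cost w tau = route_cost w sigma + (w P Z + w Q Z - w P Q).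
  case: Htau => [[Hn ->]|[Hn ->]].
    have [H1 H2] := Hins P Q Ps HPQ Hn; split => //.
    rewrite H2 (Hsym Z Q (ZneqV Q QV)); ring.
  have [H1 H2] := Hins Q P Qs QP Hn.
  split => //.
  rewrite H2 (Hsym Z P (ZneqV P PV)) (Hsym Q P QP); ring.
split => // t Ht.
have Zt : Z \in t by rewrite (perm_mem Ht) mem_enum setU11.
case/splitPr: Zt Ht => t1 t2 Ht.
rewrite cost_catC.
rewrite /is_route perm_catC in Ht.
have E := @enumU1 _ V Z HZ.
have Hu2 : perm_eq (t2 ++ t1) (enum V).
  by rewrite -(perm_cons Z); exact: (perm_trans Ht E).
have memu : forall x, (x \in t2 ++ t1) = (x \in V).
  by move=> x; rewrite (perm_mem Hu2) mem_enum.
have uu : uniq (t2 ++ t1) by rewrite (perm_uniq Hu2) enum_uniq.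
rewrite cat_cons.
case Eu: (t2 ++ t1) => [|B u'] in Hu2 memu uu *.
  by move: (memu P); rewrite PV.
have Hc := Hopt _ Hu2.
rewrite cost_Z2.
have AB : last B u' != B.
  case Eu': u' => [|y u''] in memu uu *.
    move: (memu P) (memu Q); rewrite PV QV !inE => /eqP EP /eqP EQ.
    by move: HPQ; rewrite EP EQ eqxx.
  apply/eqP => EAB; move: uu => /= /andP[Bn _]; move: Bn.
  by rewrite -{1}EAB /= mem_last.
set A := last B u' in AB *.
have AV : A \in V by rewrite -memu /A mem_last.
have BV : B \in V by rewrite -memu mem_head.
have key : w P Z + w Q Z - w P Q <= w A Z + w B Z - w A B.
  case: (boolP (((A == P) && (B == Q)) || ((A == Q) && (B == P)))).
    case/orP => /andP[/eqP-> /eqP->]; first by [].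
    rewrite (Hsym Q P QP).
    by rewrite [w Q Z + _]addrC.
  move=> Hn; have := Hmin A B AV BV AB Hn => Hn'.
  have : ~~ (w A Z + w B Z - w A B <= w P Z + w Q Z - w P Q) by apply/negP.
  by rewrite -ltNge => /ltW.
rewrite Hct (Hsym Z B (ZneqV B BV)).
lra.
Qed.
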